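(* Let $\mu\ge\lambda>0$. Let $\zeta_t^O$ be the nearest neighbours three state contact process with parameters $(\lambda,\mu)$ started from the standard initial configuration, with $I_t=\{x:\zeta_t^O(x)=1\}$, $r_t=\sup I_t$, $l_t=\inf I_t$, and let $\xi_t^{\mathbb Z}$ be the nearest neighbours contact process with parameter $\mu$ started from $\mathbb Z$, the two coupled by the graphical construction. Then for all $t\ge0$, $I_t=\xi_t^{\mathbb Z}\cap[l_t,r_t]$ on the event $\{I_t\ne\emptyset\}$.
   Context: The nearest neighbours three state contact process with parameters $(\lambda,\mu)$ has state space $\{-1,0,1\}^{\mathbb Z}$; each site $x$ makes transitions $-1\to1$ at rate $\lambda n_t(x)$, $0\to1$ at rate $\mu n_t(x)$, $1\to0$ at rate 1, where $n_t(x)$ is the number of $y\in\{x-1,x+1\}$ in state 1. The standard initial configuration has the origin in state 1 and all other sites in state $-1$. Graphical construction (for $\mu\ge\lambda$): for each $x\in\mathbb Z$ and $y\in\{x-1,x+1\}$ take independent Poisson processes of rate $\lambda$ ($\lambda$-arrows from $x$ to $y$) and rate $\mu-\lambda$ ($(\mu-\lambda)$-arrows from $x$ to $y$), and for each $x$ an independent rate-1 Poisson process of recovery marks at $x$. The three state process is defined from these: at a $\lambda$-arrow from $x$ to $y$, if just before $x$ is in state 1 and $y$ in state $0$ or $-1$, then $y$ becomes 1; at a $(\mu-\lambda)$-arrow from $x$ to $y$, if just before $x$ is in state 1 and $y$ in state 0, then $y$ becomes 1; at a recovery mark at $x$, if $x$ is in state 1 it becomes 0. The contact process with parameter $\mu$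 started from $A\subseteq\mathbb Z$ is $\xi_t^A=\{y:$ there is an oriented path from $(x,0)$ for some $x\in A$ to $(y,t)$ moving up time lines in increasing time without passing through a recovery mark and along arrows of either type in the direction of the arrow$\}$. Processes built from the same realization are said to be coupled by the graphical construction. *)

(* Defs.v *)
From Stdlib Require Import Reals ZArith List.
Open Scope R_scope.

(** A direction [d : bool] at site [x]
    denotes the neighbour [nb x d] (x+1 if d, x-1 otherwise).
    - [Lam x d]  : a lambda-arrow from x to nb x d   (rate lambda)
    - [Mu x d]   : a (mu-lambda)-arrow from x to nb x d (rate mu - lambda)
    - [Rec x]    : a recovery mark at x (rate 1) *)
Inductive Ev : Type :=
| Lam : Z -> bool -> Ev
| Mu  : Z -> bool -> Ev
| Rec : Z -> Ev.

Definition nb (x : Z) (d : bool) : Z := if d then (x + 1)%Z else (x - 1)%Z.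

(** A realization of the graphical construction: [occ e s] means that the
    Poisson process of event [e] has a point at time [s]. *)
Definition Realization := Ev -> R -> Prop.

(** Almost-sure properties of a realization of the independent Poisson
    processes (each holds with probability one). *)
Definition realization_ok (occ : Realization) : Prop :=
  (forall e s, occ e s -> 0 < s) /\
  (forall e T, exists l : list R, forall s, occ e s -> s <= T -> In s l) /\
  (forall e1 e2 s, occ e1 s -> occ e2 s -> e1 = e2) /\
  (forall T N, exists n, (N <= n)%Z /\
     forall s, s <= T ->
       ~ occ (Lam n true) s /\ ~ occ (Mu n true) s /\
       ~ occ (Lam (n+1) false) s /\ ~ occ (Mu (n+1) false) s) /\
  (forall T N, exists n, (n <= - N)%Z /\
     forall s, s <= T ->
       ~ occ (Lam n true) s /\ ~ occ (Mu n true) s /\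
       ~ occ (Lam (n+1) false) s /\ ~ occ (Mu (n+1) false) s).

Inductive cpath (occ : Realization) : Z -> R -> Z -> R -> Prop :=
| cpath_stay : forall x s t, s <= t ->
    (forall u, s <= u <= t -> ~ occ (Rec x) u) -> cpath occ x s x t
| cpath_jump : forall x s u d y t, s <= u ->
    (forall v, s <= v <= u -> ~ occ (Rec x) v) ->
    (occ (Lam x d) u \/ occ (Mu x d) u) ->
    cpath occ (nb x d) u y t -> cpath occ x s y t.

(** The contact process with parameter mu started from A. *)
Definition xi (occ : Realization) (A : Z -> Prop) (t : R) (y : Z) : Prop :=
  exists x, A x /\ cpath occ x 0 y t.

Inductive St : Type := Sm1 | S0 | S1.

Definition std_init (x : Z) : St := if Z.eqb x 0 then S1 else Sm1.

Definition arrow_into (occ : Realization) (x : Z) (u : R) : Prop :=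
  exists y d, nb y d = x /\ (occ (Lam y d) u \/ occ (Mu y d) u).

Definition three_state_process (occ : Realization) (z0 : Z -> St)
    (zeta : R -> Z -> St) : Prop :=
  zeta 0 = z0 /\
  (forall x a b, 0 <= a <= b ->
     (forall u, a < u <= b -> ~ occ (Rec x) u /\ ~ arrow_into occ x u) ->
     zeta b x = zeta a x) /\
  (forall x s, occ (Rec x) s ->
     exists eps, 0 < eps /\ exists a,
       (forall u, s - eps < u < s -> zeta u x = a) /\
       zeta s x = (match a with S1 => S0 | _ => a end)) /\
  (forall y d s, occ (Lam y d) s ->
     exists eps, 0 < eps /\ exists a b,
       (forall u, s - eps < u < s -> zeta u y = a /\ zeta u (nb y d) = b) /\
       zeta s (nb y d) = (match a with S1 => S1 | _ => b end)) /\
  (forall y d s, occ (Mu y d) s ->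
     exists eps, 0 < eps /\ exists a b,
       (forall u, s - eps < u < s -> zeta u y = a /\ zeta u (nb y d) = b) /\
       zeta s (nb y d) = (match a, b with S1, S0 => S1 | _, _ => b end)).

Definition occupied (zeta : R -> Z -> St) (t : R) (x : Z) : Prop :=
  zeta t x = S1.

(** y in [inf I, sup I] for a set I of integers (inf/sup possibly infinite):
    equivalently there are a, b in I with a <= y <= b. *)
Definition in_hull (I : Z -> Prop) (y : Z) : Prop :=
  exists a b, I a /\ I b /\ (a <= y <= b)%Z.

(* Main.v *)
Require Import Defs.
From Stdlib Require Import Reals ZArith List Lra Lia Classical.
Open Scope R_scope.

Definition blocked (occ : Realization) (T : R) (n : Z) : Prop :=
  forall s, s <= T ->
       ~ occ (Lam n true) s /\ ~ occ (Mu n true) s /\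
       ~ occ (Lam (n+1) false) s /\ ~ occ (Mu (n+1) false) s.

Definition site (e : Ev) : Z := match e with Lam w _ => w | Mu w _ => w | Rec w => w end.

Definition affects (e : Ev) (z : Z) : Prop :=
  match e with Rec w => w = z | Lam y d => nb y d = z | Mu y d => nb y d = z end.

Lemma nb_neq : forall x d, nb x d <> x.
Proof. intros x [|]; simpl; lia. Qed.

Lemma cpath_le : forall occ x s y t, cpath occ x s y t -> s <= t.
Proof. intros occ x s y t H; induction H; lra. Qed.

Lemma cpath_blockL : forall occ T n, blocked occ T n ->
  forall x s y t, cpath occ x s y t -> t <= T -> (x <= n)%Z -> (y <= n)%Z.
Proof.
  intros occ T n Hb x s y t H.
  induction H as [x s t Hst Hnr | x s u d y t Hsu Hnr Harr Hc IH]; intros Ht Hx; auto.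
  apply IH; auto.
  assert (u <= T) by (pose proof (cpath_le _ _ _ _ _ Hc); lra).
  destruct (Z.eq_dec x n) as [->|Hne].
  - destruct (Hb u H) as [H1 [H2 _]]. destruct d; simpl.
    + destruct Harr; contradiction.
    + lia.
  - destruct d; simpl; lia.
Qed.

Lemma cpath_blockR : forall occ T n, blocked occ T n ->
  forall x s y t, cpath occ x s y t -> t <= T -> (n + 1 <= x)%Z -> (n + 1 <= y)%Z.
Proof.
  intros occ T n Hb x s y t H.
  induction H as [x s t Hst Hnr | x s u d y t Hsu Hnr Harr Hc IH]; intros Ht Hx; auto.
  apply IH; auto.
  assert (u <= T) by (pose proof (cpath_le _ _ _ _ _ Hc); lra).
  destruct (Z.eq_dec x (n+1)) as [->|Hne].
  - destruct (Hb u H) as [_ [_ [H1 H2]]]. destruct d; simpl.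
    + lia.
    + destruct Harr; contradiction.
  - destruct d; simpl; lia.
Qed.

Lemma cpath_extend : forall occ x m z t, cpath occ x m z t ->
  forall s, s <= m -> (forall v, s <= v <= m -> ~ occ (Rec x) v) -> cpath occ x s z t.
Proof.
  intros occ x m z t H; destruct H as [x m t Hst Hnr | x m u d y t Hsu Hnr Harr Hc];
    intros s0 Hs Hnr'.
  - apply cpath_stay; [lra|]. intros v Hv.
    destruct (Rle_dec v m); [apply Hnr'; lra | apply Hnr; lra].
  - eapply cpath_jump; [| |exact Harr|exact Hc]; [lra|].
    intros v Hv. destruct (Rle_dec v m); [apply Hnr'; lra | apply Hnr; lra].
Qed.

Lemma cpath_concat : forall occ x s w m, cpath occ x s w m ->
  forall z t, cpath occ w m z t -> cpath occ x s z t.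
Proof.
  intros occ x s w m H; induction H as [x s t Hst Hnr | x s u d y t Hsu Hnr Harr Hc IH];
    intros z t' H'.
  - eapply cpath_extend; eauto.
  - eapply cpath_jump; eauto.
Qed.

Lemma cpath_split : forall occ x s z t, cpath occ x s z t ->
  forall m, s <= m <= t -> exists w, cpath occ x s w m /\ cpath occ w m z t.
Proof.
  intros occ x s z t H; induction H as [x s t Hst Hnr | x s u d y t Hsu Hnr Harr Hc IH];
    intros m Hm.
  - exists x; split; apply cpath_stay; try lra; intros v Hv; apply Hnr; lra.
  - destruct (Rle_lt_dec m u).
    + exists x; split.
      * apply cpath_stay; [lra|]. intros v Hv; apply Hnr; lra.
      * eapply cpath_jump; [| |exact Harr|exact Hc]; [lra|]. intros v Hv; apply Hnr; lra.
    + pose proof (cpath_le _ _ _ _ _ Hc).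
      destruct (IH m) as [w [H1 H2]]; [lra|].
      exists w; split; auto. eapply cpath_jump; eauto.
Qed.

Fixpoint cnt (l : list R) (s : R) : nat :=
  match l with nil => O | v :: l' => ((if Rle_dec v s then 1 else 0) + cnt l' s)%nat end.

Lemma cnt_mono : forall l u s, u <= s -> (cnt l u <= cnt l s)%nat.
Proof.
  induction l; intros u s H; simpl; [lia|].
  specialize (IHl u s H).
  destruct (Rle_dec a u); destruct (Rle_dec a s); try lia. lra.
Qed.

Lemma cnt_lt : forall l u m s, u < m -> m <= s -> In m l -> (cnt l u < cnt l s)%nat.
Proof.
  induction l; intros u m s H1 H2 H3; simpl; [contradiction|].
  destruct H3 as [->|H3].
  - pose proof (cnt_mono l u s ltac:(lra)).
    destruct (Rle_dec m u); [lra|]. destruct (Rle_dec m s); [lia|lra].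
  - specialize (IHl u m s H1 H2 H3).
    destruct (Rle_dec a u); destruct (Rle_dec a s); try lia. lra.
Qed.

Lemma lastP : forall (P : R -> Prop) l s,
  (forall x, In x l -> P x -> s < x) \/
  (exists m, In m l /\ P m /\ m <= s /\ forall x, In x l -> P x -> x <= s -> x <= m).
Proof.
  intros P l s; induction l as [|a l IH].
  - left; intros x [].
  - destruct IH as [H|[m [Hm1 [Hm2 [Hm3 Hm4]]]]].
    + destruct (classic (P a /\ a <= s)) as [[Pa Ha]|Hn].
      * right; exists a; repeat split; auto; [left; auto|].
        intros x [<-|Hx] Px Hxs; [lra|]. specialize (H x Hx Px); lra.
      * left; intros x [<-|Hx] Px; [|apply H; auto].
        apply Rnot_le_lt; intro; apply Hn; auto.
    + destruct (classic (P a /\ a <= s /\ m < a)) as [[Pa [Ha Hma]]|Hn].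
      * right; exists a; repeat split; auto; [left; auto|].
        intros x [<-|Hx] Px Hxs; [lra|]. specialize (Hm4 x Hx Px Hxs); lra.
      * right; exists m; repeat split; auto; [right; auto|].
        intros x [<-|Hx] Px Hxs; [|apply Hm4; auto].
        apply Rnot_lt_le; intro; apply Hn; auto.
Qed.
Section Main.
Variable occ : Realization.
Variable zeta : R -> Z -> St.
Hypothesis Hdist : forall e1 e2 s, occ e1 s -> occ e2 s -> e1 = e2.
Hypothesis Hpos : forall e s, occ e s -> 0 < s.
Hypothesis Hz : three_state_process occ std_init zeta.
Variable T : R.
Variables n1 n2 : Z.
Hypothesis Hb1 : blocked occ T n1.
Hypothesis Hb2 : blocked occ T n2.
Definition inbox (z : Z) : Prop := (n1 < z <= n2)%Z.
Definition bev (v : R) : Prop := exists e, inbox (site e) /\ occ e v.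
Variable L : list R.
Hypothesis HL : forall e s, inbox (site e) -> occ e s -> s <= T -> In s L.

Lemma nb_inbox_arrow : forall w d v, inbox w -> (occ (Lam w d) v \/ occ (Mu w d) v) ->
  v <= T -> inbox (nb w d).
Proof.
  unfold inbox; intros w d v Hw Harr Hv. destruct d; simpl.
  - destruct (Z.eq_dec w n2) as [->|]; [|lia].
    destruct (Hb2 v Hv) as [H1 [H2 _]]; destruct Harr; contradiction.
  - destruct (Z.eq_dec w (n1+1)) as [->|]; [|lia].
    destruct (Hb1 v Hv) as [_ [_ [H1 H2]]]; destruct Harr; contradiction.
Qed.

Lemma arrow_into_box : forall z v, inbox z -> arrow_into occ z v -> v <= T ->
  exists y d, inbox y /\ nb y d = z /\ (occ (Lam y d) v \/ occ (Mu y d) v).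
Proof.
  intros z v Hz' [y [d [Hnb Harr]]] Hv.
  destruct (classic (inbox y)) as [Hy|Hy]; [exists y, d; auto|].
  exfalso. unfold inbox in *. destruct d; simpl in Hnb.
  - assert (y = n1) by lia; subst.
    destruct (Hb1 v Hv) as [H1 [H2 _]]; destruct Harr; contradiction.
  - assert (y = n2 + 1)%Z by lia; subst.
    destruct (Hb2 v Hv) as [_ [_ [H1 H2]]]; destruct Harr; contradiction.
Qed.

Lemma const_gen : forall z a b, inbox z -> 0 <= a <= b -> b <= T ->
  (forall v e, a < v <= b -> inbox (site e) -> occ e v -> ~ affects e z) ->
  zeta b z = zeta a z.
Proof.
  intros z a b Hzb Hab HbT H.
  destruct Hz as [_ [Hc _]]. apply Hc; [lra|]. intros v Hv; split.
  - intro HR. apply (H v (Rec z)); simpl; auto.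
  - intro HA. destruct (arrow_into_box z v Hzb HA ltac:(lra)) as [y [d [Hy [Hnb [HL'|HM]]]]].
    + apply (H v (Lam y d)); auto.
    + apply (H v (Mu y d)); auto.
Qed.

Lemma cpath_inbox : forall w u z s, cpath occ w u z s -> s <= T -> inbox z -> inbox w.
Proof.
  intros w u z s H Hs Hzb. unfold inbox in *.
  destruct (Z_le_gt_dec w n1).
  - pose proof (cpath_blockL _ _ _ Hb1 _ _ _ _ H Hs l). lia.
  - destruct (Z_le_gt_dec w n2); [lia|].
    pose proof (cpath_blockR _ _ _ Hb2 _ _ _ _ H Hs ltac:(lia)). lia.
Qed.

Lemma tail_lemma : forall a m y t, cpath occ a m y t -> inbox a ->
  (forall d, ~ occ (Lam a d) m /\ ~ occ (Mu a d) m) ->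
  (forall v, m < v <= t -> ~ bev v) -> a = y.
Proof.
  intros a m y t H; destruct H as [x s t Hst Hnr | x s u d y t Hsu Hnr Harr Hc];
    intros Ha Hnot Hnb; auto.
  exfalso. pose proof (cpath_le _ _ _ _ _ Hc).
  destruct (Req_dec u s) as [->|Hne].
  - destruct (Hnot d); destruct Harr; contradiction.
  - apply (Hnb u); [lra|]. destruct Harr as [Harr|Harr]; [exists (Lam x d)|exists (Mu x d)]; simpl; auto.
Qed.

Lemma short_fwd : forall w u z s, cpath occ w u z s -> forall m,
  inbox w -> u < m -> m <= s -> s <= T ->
  (forall v, u <= v <= s -> bev v -> v = m) ->
  (w = z /\ ~ occ (Rec z) m) \/
  (exists d, nb w d = z /\ (occ (Lam w d) m \/ occ (Mu w d) m)).
Proof.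
  intros w u z s H; destruct H as [x s t Hst Hnr | x s u' d y t Hsu Hnr Harr Hc];
    intros m Hw Hum Hms HsT Hex.
  - left; split; auto. apply Hnr; lra.
  - right. pose proof (cpath_le _ _ _ _ _ Hc).
    assert (u' = m).
    { apply Hex; [lra|]. destruct Harr as [Harr|Harr]; [exists (Lam x d)|exists (Mu x d)]; simpl; auto. }
    subst u'. exists d; split; auto.
    apply (tail_lemma _ _ _ _ Hc).
    + apply (nb_inbox_arrow x d m); auto; lra.
    + intros d'; split; intro Ho; destruct Harr as [Harr|Harr];
        pose proof (Hdist _ _ _ Ho Harr) as Heq; apply (nb_neq x d); congruence.
    + intros v Hv Hb. pose proof (Hex v ltac:(lra) Hb). lra.
Qed.

Lemma short_bwd : forall w z u m s, inbox w -> inbox z -> u < m -> m <= s ->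
  (forall v, u <= v <= s -> bev v -> v = m) ->
  ((w = z /\ ~ occ (Rec z) m) \/
   (exists d, nb w d = z /\ (occ (Lam w d) m \/ occ (Mu w d) m))) ->
  cpath occ w u z s.
Proof.
  intros w z u m s Hw Hzb Hum Hms Hex [[<- Hnr]|[d [Hnb Harr]]].
  - apply cpath_stay; [lra|]. intros v Hv HR.
    assert (v = m) by (apply Hex; [lra| exists (Rec w); simpl; auto]). subst; auto.
  - eapply cpath_jump with (u := m) (d := d); [lra| |exact Harr|].
    + intros v Hv HR.
      assert (v = m) by (apply Hex; [lra| exists (Rec w); simpl; auto]). subst.
      destruct Harr as [Ha|Ha]; pose proof (Hdist _ _ _ HR Ha); discriminate.
    + rewrite Hnb. apply cpath_stay; [lra|]. intros v Hv HR.
      assert (v = m) by (apply Hex; [lra| exists (Rec z); simpl; auto]). subst.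
      destruct Harr as [Ha|Ha]; pose proof (Hdist _ _ _ HR Ha); discriminate.
Qed.

Definition Xp (s : R) (z : Z) : Prop := exists x, cpath occ x 0 z s.

Definition Inv (f : Z -> St) (X : Z -> Prop) : Prop :=
  (forall z, inbox z -> f z = S1 -> X z) /\
  (forall z1 z z2, inbox z1 -> inbox z2 -> (z1 <= z <= z2)%Z ->
     f z1 <> Sm1 -> f z2 <> Sm1 -> f z <> Sm1) /\
  (forall a z b, inbox a -> inbox b -> (a <= z <= b)%Z -> f a = S1 -> f b = S1 ->
     X z -> f z = S1).

Lemma step_init : forall (f : Z -> St) (X : Z -> Prop),
  (forall z, inbox z -> f z = std_init z) -> (forall z, inbox z -> X z) -> Inv f X.
Proof.
  intros f X Hf HX. unfold std_init in Hf. split; [|split].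
  - intros; auto.
  - intros z1 z z2 H1 H2 Hz' Hn1 Hn2.
    rewrite Hf in Hn1, Hn2 by auto.
    destruct (Z.eqb_spec z1 0); [|congruence].
    destruct (Z.eqb_spec z2 0); [|congruence].
    assert (z = 0)%Z by lia. subst. rewrite Hf by (unfold inbox in *; lia). simpl. discriminate.
  - intros a z b Ha Hb Hz' Hfa Hfb _.
    rewrite Hf in Hfa, Hfb by auto.
    destruct (Z.eqb_spec a 0); [|congruence].
    destruct (Z.eqb_spec b 0); [|congruence].
    assert (z = 0)%Z by lia. subst. rewrite Hf by (unfold inbox in *; lia). reflexivity.
Qed.

Lemma step_rec : forall (f g : Z -> St) (Xu Xs : Z -> Prop) w, inbox w ->
  (forall z, inbox z -> z <> w -> g z = f z) ->
  g w = (match f w with S1 => S0 | a => a end) ->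
  (forall z, inbox z -> Xs z -> Xu z /\ z <> w) ->
  (forall z, inbox z -> z <> w -> Xu z -> Xs z) ->
  Inv f Xu -> Inv g Xs.
Proof.
  intros f g Xu Xs w Hw Hoth Hgw Hf Hb [IA [IC IP]].
  assert (HS1 : forall q, inbox q -> g q = S1 -> q <> w /\ f q = S1).
  { intros q Hq Hg. destruct (Z.eq_dec q w) as [->|Hne].
    - rewrite Hgw in Hg. destruct (f w); discriminate.
    - rewrite Hoth in Hg; auto. }
  assert (Hm1 : forall q, inbox q -> (g q <> Sm1 <-> f q <> Sm1)).
  { intros q Hq. destruct (Z.eq_dec q w) as [->|Hne].
    - rewrite Hgw. destruct (f w); split; intros; discriminate || auto.
    - rewrite Hoth; auto; tauto. }
  split; [|split].
  - intros z Hzb Hg. destruct (HS1 z Hzb Hg). apply Hb; auto.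
  - intros z1 z z2 H1 H2 Hzz Hn1 Hn2.
    assert (inbox z) by (unfold inbox in *; lia).
    apply Hm1; auto. apply (IC z1 z z2); auto; apply Hm1; auto.
  - intros a z b Ha Hbb Hzz Hga Hgb HX.
    assert (Hzb : inbox z) by (unfold inbox in *; lia).
    destruct (Hf z Hzb HX) as [HXu Hne].
    destruct (HS1 a Ha Hga); destruct (HS1 b Hbb Hgb).
    rewrite Hoth; auto. apply (IP a z b); auto.
Qed.

Lemma step_arrow : forall (f g : Z -> St) (Xu Xs : Z -> Prop) w w', inbox w -> inbox w' ->
  (w' = w + 1 \/ w' = w - 1)%Z ->
  (forall z, inbox z -> z <> w' -> g z = f z) ->
  ((f w = S1 /\ g w' = S1) \/ (g w' = f w' /\ (f w <> S1 \/ f w' <> S0))) ->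
  (forall z, inbox z -> Xs z -> Xu z \/ (z = w' /\ Xu w)) ->
  (forall z, inbox z -> Xu z -> Xs z) ->
  (Xu w -> Xs w') ->
  Inv f Xu -> Inv g Xs.
Proof.
  intros f g Xu Xs w w' Hw Hw' Hadj Hoth HN Hf Hb1' Hb2' [IA [IC IP]].
  split; [|split].
  - intros z Hzb Hg. destruct (Z.eq_dec z w') as [->|Hne].
    + destruct HN as [[HA _]|[HB _]]; [apply Hb2'; auto|].
      apply Hb1'; auto. apply IA; auto; congruence.
    + rewrite Hoth in Hg; auto.
  - assert (F1 : forall q, inbox q -> f q <> Sm1 -> g q <> Sm1).
    { intros q Hq Hfq. destruct (Z.eq_dec q w') as [->|Hne].
      - destruct HN as [[_ HG]|[HG _]]; rewrite HG; auto; discriminate.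
      - rewrite Hoth; auto. }
    assert (F2 : forall q, inbox q -> g q <> Sm1 -> f q <> Sm1 \/ (q = w' /\ f w = S1)).
    { intros q Hq Hgq. destruct (Z.eq_dec q w') as [->|Hne].
      - destruct HN as [[HA _]|[HG _]]; [right; auto|left; congruence].
      - left; rewrite <- Hoth; auto. }
    intros z1 z z2 H1 H2 Hzz Hn1 Hn2.
    assert (Hzb : inbox z) by (unfold inbox in *; lia).
    destruct (Z.eq_dec z z1) as [->|Hne1]; auto.
    destruct (Z.eq_dec z z2) as [->|Hne2]; auto.
    apply F1; auto.
    assert (Hl : exists z1', inbox z1' /\ (z1' <= z)%Z /\ f z1' <> Sm1).
    { destruct (F2 z1 H1 Hn1) as [Hf1|[-> Hfw]]; [exists z1; split; [auto|split;[lia|auto]]|].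
      exists w; split; [auto|split; [lia| rewrite Hfw; discriminate]]. }
    assert (Hr : exists z2', inbox z2' /\ (z <= z2')%Z /\ f z2' <> Sm1).
    { destruct (F2 z2 H2 Hn2) as [Hf2|[-> Hfw]]; [exists z2; split; [auto|split;[lia|auto]]|].
      exists w; split; [auto|split; [lia| rewrite Hfw; discriminate]]. }
    destruct Hl as [z1' [Ha1 [Ha2 Ha3]]]; destruct Hr as [z2' [Hc1 [Hc2 Hc3]]].
    apply (IC z1' z z2'); auto.
  - intros a z b Ha Hbb Hzz Hga Hgb HX.
    assert (Hzb : inbox z) by (unfold inbox in *; lia).
    destruct HN as [[HA HG]|[HG HC]].
    + destruct (Z.eq_dec z w') as [->|Hne]; auto.
      rewrite Hoth; auto.
      destruct (Hf z Hzb HX) as [HXu|[Heq _]]; [|contradiction].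
      assert (Hl : exists a', inbox a' /\ (a' <= z)%Z /\ f a' = S1).
      { destruct (Z.eq_dec a w') as [->|Hna]; [exists w; split; [auto|split;[lia|auto]]|].
        exists a; split; [auto|split; [lia| rewrite <- Hoth; auto]]. }
      assert (Hr : exists b', inbox b' /\ (z <= b')%Z /\ f b' = S1).
      { destruct (Z.eq_dec b w') as [->|Hnb]; [exists w; split; [auto|split;[lia|auto]]|].
        exists b; split; [auto|split; [lia| rewrite <- Hoth; auto]]. }
      destruct Hl as [a' [Ha1 [Ha2 Ha3]]]; destruct Hr as [b' [Hc1 [Hc2 Hc3]]].
      apply (IP a' z b'); auto.
    + assert (Hsame : forall q, inbox q -> g q = f q).
      { intros q Hq; destruct (Z.eq_dec q w') as [->|]; auto. }
      rewrite Hsame in Hga, Hgb |- *; auto.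
      destruct (Hf z Hzb HX) as [HXu|[-> HXw]]; [apply (IP a z b); auto|].
      destruct (classic (f w = S1)) as [HA|HA].
      * destruct HC as [HC|HC]; [contradiction|].
        destruct (f w') eqn:E; auto; try contradiction.
        exfalso. apply (IC a w' b); auto; congruence.
      * destruct (classic (a <= w <= b)%Z).
        -- exfalso; apply HA; apply (IP a w b); auto.
        -- assert (w' = a \/ w' = b)%Z as [->| ->] by lia; auto.
Qed.

Lemma get_lo : forall m, 0 < m -> exists lo, 0 <= lo < m /\ forall x, In x L -> x < m -> x <= lo.
Proof.
  intros m Hm. destruct (lastP (fun x => x < m) L m) as [H0|[m' [_ [Hm'1 [_ Hm'2]]]]].
  - exists 0; split; [lra|]. intros x Hx Hxm. specialize (H0 x Hx Hxm); lra.
  - exists (Rmax 0 m'); split.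
    + split; [apply Rmax_l|]. apply Rmax_lub_lt; lra.
    + intros x Hx Hxm. specialize (Hm'2 x Hx Hxm ltac:(lra)). pose proof (Rmax_r 0 m'); lra.
Qed.

Lemma choose_u : forall lo m eps, 0 <= lo < m -> 0 < eps -> exists u, lo < u < m /\ m - eps < u.
Proof.
  intros lo m eps H1 H2. exists ((Rmax lo (m - eps) + m) / 2).
  pose proof (Rmax_l lo (m - eps)). pose proof (Rmax_r lo (m - eps)).
  assert (Rmax lo (m - eps) < m) by (apply Rmax_lub_lt; lra). lra.
Qed.

Lemma rec_case : forall s m u w, 0 <= u -> u < m -> m <= s -> s <= T ->
  (forall v, u <= v <= s -> bev v -> v = m) ->
  inbox w -> occ (Rec w) m ->
  zeta m w = (match zeta u w with S1 => S0 | a => a end) ->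
  Inv (zeta u) (Xp u) -> Inv (zeta s) (Xp s).
Proof.
  intros s m u w Hu Hum Hms HsT Hex Hw HR Hm IH.
  apply (step_rec (zeta u) (zeta s) (Xp u) (Xp s) w Hw); auto.
  - intros z Hzb Hne. apply const_gen; auto; [lra|].
    intros v e Hv He Ho. assert (v = m) by (apply Hex; [lra|exists e; auto]). subst.
    rewrite (Hdist _ _ _ Ho HR). simpl. auto.
  - rewrite <- Hm. apply const_gen; auto; [lra|].
    intros v e Hv He Ho. assert (v = m) by (apply Hex; [lra|exists e; auto]). lra.
  - intros z Hzb [x Hx].
    destruct (cpath_split _ _ _ _ _ Hx u ltac:(lra)) as [v [H1 H2]].
    pose proof (cpath_inbox _ _ _ _ H2 HsT Hzb) as Hvb.
    destruct (short_fwd _ _ _ _ H2 m Hvb Hum Hms HsT Hex) as [[-> Hnr]|[d [_ Harr]]].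
    + split; [exists x; auto|]. intros ->; contradiction.
    + exfalso. destruct Harr as [Ha|Ha]; pose proof (Hdist _ _ _ Ha HR); discriminate.
  - intros z Hzb Hne [x Hx]. exists x. eapply cpath_concat; [exact Hx|].
    apply (short_bwd z z u m s); auto. left; split; auto.
    intro Ho. pose proof (Hdist _ _ _ Ho HR) as E. injection E; auto.
Qed.

Lemma arrow_case : forall s m u w d, 0 <= u -> u < m -> m <= s -> s <= T ->
  (forall v, u <= v <= s -> bev v -> v = m) ->
  inbox w -> (occ (Lam w d) m \/ occ (Mu w d) m) ->
  ((zeta u w = S1 /\ zeta m (nb w d) = S1) \/
   (zeta m (nb w d) = zeta u (nb w d) /\ (zeta u w <> S1 \/ zeta u (nb w d) <> S0))) ->
  Inv (zeta u) (Xp u) -> Inv (zeta s) (Xp s).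
Proof.
  intros s m u w d Hu Hum Hms HsT Hex Hw HE HN IH.
  assert (Hw' : inbox (nb w d)) by (apply (nb_inbox_arrow w d m); auto; lra).
  assert (Huniq : forall e, occ e m -> e = Lam w d \/ e = Mu w d).
  { intros e Ho. destruct HE as [Ha|Ha]; [left|right]; exact (Hdist _ _ _ Ho Ha). }
  assert (Hsm : zeta s (nb w d) = zeta m (nb w d)).
  { apply const_gen; auto; [lra|].
    intros v e Hv He Ho. assert (v = m) by (apply Hex; [lra|exists e; auto]). lra. }
  apply (step_arrow (zeta u) (zeta s) (Xp u) (Xp s) w (nb w d) Hw Hw').
  - destruct d; simpl; lia.
  - intros z Hzb Hne. apply const_gen; auto; [lra|].
    intros v e Hv He Ho. assert (v = m) by (apply Hex; [lra|exists e; auto]). subst.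
    destruct (Huniq e Ho) as [->| ->]; simpl; auto.
  - rewrite Hsm; auto.
  - intros z Hzb [x Hx].
    destruct (cpath_split _ _ _ _ _ Hx u ltac:(lra)) as [v [H1 H2]].
    pose proof (cpath_inbox _ _ _ _ H2 HsT Hzb) as Hvb.
    destruct (short_fwd _ _ _ _ H2 m Hvb Hum Hms HsT Hex) as [[-> Hnr]|[d' [Hnb Harr]]].
    + left; exists x; auto.
    + right. assert (v = w /\ d' = d) as [-> ->].
      { destruct Harr as [Ha|Ha]; destruct (Huniq _ Ha) as [E|E]; inversion E; subst; auto. }
      split; auto. exists x; auto.
  - intros z Hzb [x Hx]. exists x. eapply cpath_concat; [exact Hx|].
    apply (short_bwd z z u m s); auto. left; split; auto.
    intro Ho. destruct (Huniq _ Ho); discriminate.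
  - intros [x Hx]. exists x. eapply cpath_concat; [exact Hx|].
    apply (short_bwd w (nb w d) u m s); auto. right; exists d; auto.
  - exact IH.
Qed.

Lemma main_step : forall s, 0 <= s <= T ->
  (forall u, 0 <= u -> u < s -> (cnt L u < cnt L s)%nat -> Inv (zeta u) (Xp u)) ->
  Inv (zeta s) (Xp s).
Proof.
  intros s Hs IHs.
  destruct (lastP bev L s) as [Hnone | [m [HmL [Hbm [Hms Hmax]]]]].
  - assert (Hno : forall v, 0 <= v <= s -> ~ bev v).
    { intros v Hv [e [He Ho]]. pose proof (Hnone v (HL e v He Ho ltac:(lra)) (ex_intro _ e (conj He Ho))). lra. }
    apply step_init.
    + intros z Hzb. destruct Hz as [H0 _]. rewrite <- H0.
      apply const_gen; auto; [lra|lra|].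
      intros v e Hv He Ho. exfalso; apply (Hno v); [lra|exists e; auto].
    + intros z Hzb. exists z. apply cpath_stay; [lra|].
      intros v Hv HR. apply (Hno v); [lra|exists (Rec z); simpl; auto].
  - destruct Hbm as [e [He Hoe]]. pose proof (Hpos _ _ Hoe) as Hm0.
    destruct (get_lo m Hm0) as [lo [Hlo1 Hlo2]].
    assert (Hexg : forall u, lo < u -> u < m ->
              forall v, u <= v <= s -> bev v -> v = m).
    { intros u Hu1 Hu2 v Hv Hb.
      destruct Hb as [e' [He' Ho']] eqn:Eb.
      pose proof (HL e' v He' Ho' ltac:(lra)) as HvL.
      destruct (Rtotal_order v m) as [Hlt|[Heq|Hgt]]; auto.
      - specialize (Hlo2 v HvL Hlt); lra.
      - specialize (Hmax v HvL Hb ltac:(lra)); lra. }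
    destruct Hz as [_ [_ [HzR [HzL HzM]]]].
    destruct e as [w d | w d | w]; simpl in He.
    + destruct (HzL w d m Hoe) as [eps [Heps [a [b [Hab Hmv]]]]].
      destruct (choose_u lo m eps Hlo1 Heps) as [u [[Hu1 Hu2] Hu3]].
      destruct (Hab u ltac:(lra)) as [Ha Hb].
      apply (arrow_case s m u w d); auto; try lra.
      * apply Hexg; auto.
      * rewrite Hmv, Ha, Hb. destruct a; [right; split; auto; left; discriminate
                                        |right; split; auto; left; discriminate
                                        |left; auto].
      * apply IHs; [lra|lra|]. apply (cnt_lt L u m s); auto.
    + destruct (HzM w d m Hoe) as [eps [Heps [a [b [Hab Hmv]]]]].
      destruct (choose_u lo m eps Hlo1 Heps) as [u [[Hu1 Hu2] Hu3]].
      destruct (Hab u ltac:(lra)) as [Ha Hb].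
      apply (arrow_case s m u w d); auto; try lra.
      * apply Hexg; auto.
      * rewrite Hmv, Ha, Hb. destruct a; destruct b;
          first [ left; split; reflexivity
                | right; split; [reflexivity| first [left; discriminate | right; discriminate]]].
      * apply IHs; [lra|lra|]. apply (cnt_lt L u m s); auto.
    + destruct (HzR w m Hoe) as [eps [Heps [a [Hav Hmv]]]].
      destruct (choose_u lo m eps Hlo1 Heps) as [u [[Hu1 Hu2] Hu3]].
      apply (rec_case s m u w); auto; try lra.
      * apply Hexg; auto.
      * rewrite Hmv, (Hav u ltac:(lra)). destruct a; reflexivity.
      * apply IHs; [lra|lra|]. apply (cnt_lt L u m s); auto.
Qed.

Theorem inv_all : forall s, 0 <= s <= T -> Inv (zeta s) (Xp s).
Proof.
  assert (forall n s, (cnt L s < n)%nat -> 0 <= s <= T -> Inv (zeta s) (Xp s)).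
  { induction n; intros s Hc Hs; [lia|].
    apply main_step; auto. intros u Hu Hus Hcu. apply IHn; [lia|lra]. }
  intros s Hs. apply (H (S (cnt L s))); auto.
Qed.
End Main.

Lemma list_events : forall (occ : Realization) T,
  (forall e T, exists l : list R, forall s, occ e s -> s <= T -> In s l) ->
  forall es : list Ev, exists L, forall e s, In e es -> occ e s -> s <= T -> In s L.
Proof.
  intros occ T Hfin es. induction es as [|a es IH].
  - exists nil; intros e s [].
  - destruct IH as [L HL']. destruct (Hfin a T) as [l Hl].
    exists (l ++ L). intros e s [<-|He] Ho Hs; apply in_or_app; [left|right]; eauto.
Qed.

Lemma enum_events : forall n1 (k : nat), exists es, forall e,
  (n1 < site e <= n1 + Z.of_nat k)%Z -> In e es.
Proof.
  intros n1 k. induction k as [|k IH].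
  - exists nil. intros e H. simpl in H. lia.
  - destruct IH as [es Hes].
    set (z := (n1 + Z.of_nat (S k))%Z).
    exists (Lam z true :: Lam z false :: Mu z true :: Mu z false :: Rec z :: es).
    intros e He. destruct (Z.eq_dec (site e) z) as [Heq|Hne].
    + destruct e as [w [|] | w [|] | w]; simpl in Heq; subst; simpl; tauto.
    + do 5 right. apply Hes. unfold z in *. lia.
Qed.

Lemma box_list : forall (occ : Realization) T n1 n2,
  (forall e T, exists l : list R, forall s, occ e s -> s <= T -> In s l) ->
  exists L, forall e s, inbox n1 n2 (site e) -> occ e s -> s <= T -> In s L.
Proof.
  intros occ T n1 n2 Hfin.
  destruct (enum_events n1 (Z.to_nat (n2 - n1))) as [es Hes].
  destruct (list_events occ T Hfin es) as [L HL'].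
  exists L. intros e s He Ho Hs. apply (HL' e s); auto. apply Hes.
  unfold inbox in He. rewrite Z2Nat.id by lia. lia.
Qed.

Theorem mainTheorem6 :
  forall (lambda mu : R), 0 < lambda -> lambda <= mu ->
  forall (occ : Realization), realization_ok occ ->
  forall (zeta : R -> Z -> St), three_state_process occ std_init zeta ->
  forall t : R, 0 <= t ->
    (exists x, occupied zeta t x) ->
    forall y : Z,
      occupied zeta t y <->
      (xi occ (fun _ => True) t y /\ in_hull (occupied zeta t) y).
Proof.
  intros lambda mu _ _ occ Hok zeta Hz t Ht _ y.
  destruct Hok as [Hpos [Hfin [Hdist [HR HLf]]]].
  assert (Hbox : forall p q, exists n1 n2, blocked occ t n1 /\ blocked occ t n2 /\
                   (n1 < p)%Z /\ (q <= n2)%Z).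
  { intros p q. destruct (HR t q) as [n2 [Hn2 Hb2]]. destruct (HLf t (-(p-1))%Z) as [n1 [Hn1 Hb1]].
    exists n1, n2. split; [exact Hb1|]. split; [exact Hb2|]. lia. }
  split.
  - intros Hy. destruct (Hbox y y) as [n1 [n2 [Hb1 [Hb2 [H1 H2]]]]].
    destruct (box_list occ t n1 n2 Hfin) as [L HL].
    destruct (inv_all occ zeta Hdist Hpos Hz t n1 n2 Hb1 Hb2 L HL t ltac:(lra)) as [IA _].
    destruct (IA y ltac:(unfold inbox; lia) Hy) as [x Hx].
    split; [exists x; split; auto|]. exists y, y; repeat split; auto; lia.
  - intros [[x [_ Hx]] [a [b [Ha [Hb Hab]]]]].
    destruct (Hbox a b) as [n1 [n2 [Hb1 [Hb2 [H1 H2]]]]].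
    destruct (box_list occ t n1 n2 Hfin) as [L HL].
    destruct (inv_all occ zeta Hdist Hpos Hz t n1 n2 Hb1 Hb2 L HL t ltac:(lra)) as [_ [_ IP]].
    apply (IP a y b); auto; try (unfold inbox; lia). exists x; auto.
Qed.
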